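(* Let $g\ge1$, $n=g+1$, $k\in\{1,\dots,g\}$, $I_k=\{1,\dots,k\}$. Define the rational map $\tilde\psi_{[\mathbf k],v_1}:\mathbb C^{2g+1}\dashrightarrow(\mathbb C^* )^{\binom nk}\times\mathbb{WP}^{3g-1}$, $(\lambda_1,\dots,\lambda_g,\kappa_1,\dots,\kappa_n)\mapsto((\alpha_J)_{J\in\binom{[n]}k},(\mathbf U,\mathbf V,\mathbf W))$ by $$\alpha_J=\frac{\tilde A_JK_J}{\tilde A_{I_k}K_{I_k}}=\frac{K_J^2}{K_{I_k}^2}\prod_{l=1}^g\lambda_l^{(B^T\mathbf c_J)_{l+1}},\qquad[\mathbf U\ \mathbf V\ \mathbf W]=BK.$$ Then the Zariski closure of the image of $\tilde\psi_{[\mathbf k],v_1}$ equals $\mathcal H_{\Gamma,[\mathbf k],v_1}$, the Zariski closure of the image of the map $\psi_{[\mathbf k],v_1}(\beta,\kappa)=((\alpha_I)_I,(\mathbf U,\mathbf V,\mathbf W))$ with $\alpha_I=a_{\mathbf c_I}(\kappa)\prod_l\beta_l^{(\mathbf c_I)_l}$ and $[\mathbf U\ \mathbf V\ \mathbf W]=BK$; i.e. the two parametrizations are equivalent.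
   Context: $B\in\mathbb Z^{g\times n}$ has $B_{i,1}=1$, $B_{i,i+1}=-1$, other entries $0$; $K$ is the $n\times 3$ matrix $K_{ij}=\kappa_i^j$; $\mathbb{WP}^{3g-1}$ has coordinates $(\mathbf U,\mathbf V,\mathbf W)$ of weights $1,2,3$. $\tilde A=V\cdot\mathrm{diag}(1,\lambda_1,\dots,\lambda_g)$ with $V_{ij}=\kappa_j^{i-1}$ ($k\times n$), $\tilde A_J$ its maximal minor on columns $J$, and $K_J=\prod_{i<j\in J}(\kappa_j-\kappa_i)$. Let $\mathbf s\in\mathbb R^n$ have first $k$ entries $1$, rest $0$; for a $k$-subset $I$, $\mathbf c_I\in\mathbb Z^g$ is the unique vector with $B^T\mathbf c_I+\mathbf s=\mathbf 1_I$. For $\mathbf c\in\mathbb Z^g$, $a_{\mathbf c}(\kappa)=\prod_{i}(\kappa_{i+1}-\kappa_1)^{-2c_i^2}\prod_{i<j}\big(\frac{(\kappa_{i+1}-\kappa_{j+1})^2}{(\kappa_{i+1}-\kappa_1)^2(\kappa_{j+1}-\kappa_1)^2}\big)^{c_ic_j}$. $\mathcal H_{\Gamma,[\mathbf k],v_1}$ is the Hirota variety component of the genus-$g$ banana graph parametrizing KP multi-solitons from degenerate hyperelliptic curves. *)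

(* Defs.v *)
From HB Require Import structures.
From mathcomp Require Import all_boot all_order all_algebra.
From mathcomp Require Import reals complex.
Set Implicit Arguments. Unset Strict Implicit. Unset Printing Implicit Defensive.
Import Order.TTheory GRing.Theory Num.Theory.
Local Open Scope ring_scope.
Local Open Scope complex_scope.

Section Defs.
Variable F : fieldType.

(* A polynomial in variables indexed by a finite type X is a finite list of
   (coefficient, exponent vector) terms. *)
Definition polyf (X : finType) := seq (F * {ffun X -> nat}).

Definition peval (X : finType) (p : polyf X) (v : X -> F) : F :=
  \sum_(m <- p) m.1 * \prod_(x : X) v x ^+ m.2 x.

Definition zclosure (X : finType) (S : (X -> F) -> Prop) : (X -> F) -> Prop :=
  fun v => forall p : polyf X, (forall w, S w -> peval p w = 0) -> peval p v = 0.

Variables (g k : nat).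
(* n = g + 1 ; indices are 0-based: kappa_1..kappa_n  ~  kappa 0 .. kappa g *)

Definition ksub := {J : {set 'I_g.+1} | #|J| == k}.

Definition Ik : {set 'I_g.+1} := [set i : 'I_g.+1 | (i < k)%N].

Definition Bmx : 'M[F]_(g, g.+1) :=
  \matrix_(i < g, j < g.+1)
     ((if j == ord0 then 1 else 0) - (if j == lift ord0 i then 1 else 0)).

Definition Kmx (kappa : 'I_g.+1 -> F) : 'M[F]_(g.+1, 3) :=
  \matrix_(i < g.+1, j < 3) kappa i ^+ j.+1.

Definition Vmx (kappa : 'I_g.+1 -> F) : 'M[F]_(k, g.+1) :=
  \matrix_(i < k, j < g.+1) kappa j ^+ i.
Definition Dmx (lambda : 'I_g -> F) : 'M[F]_(g.+1) :=
  diag_mx (\row_(j < g.+1) if unlift ord0 j is Some l then lambda l else 1).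
Definition Atil (lambda : 'I_g -> F) (kappa : 'I_g.+1 -> F) : 'M[F]_(k, g.+1) :=
  Vmx kappa *m Dmx lambda.

(* maximal minor on the columns J (taken in increasing order) *)
Definition minorA (lambda : 'I_g -> F) (kappa : 'I_g.+1 -> F)
    (J : {set 'I_g.+1}) : F :=
  \det (colsub (fun j : 'I_k => nth ord0 (enum J) j) (Atil lambda kappa)).

Definition KJ (kappa : 'I_g.+1 -> F) (J : {set 'I_g.+1}) : F :=
  \prod_(i in J) \prod_(j in J | (i < j)%N) (kappa j - kappa i).

(* c_I in Z^g: the unique solution of B^T c + s = 1_I; componentwise
   (B^T c)_{l+1} = - c_l, so c_l = s_{l+1} - (1_I)_{l+1}. *)
Definition cI (I : {set 'I_g.+1}) (l : 'I_g) : int :=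
  ((lift ord0 l < k)%N)%:Z - (lift ord0 l \in I)%:Z.

Definition acoef (c : 'I_g -> int) (kappa : 'I_g.+1 -> F) : F :=
  (\prod_(i < g) (kappa (lift ord0 i) - kappa ord0) ^ (- (2 * c i ^+ 2)))
  * \prod_(i < g) \prod_(j < g | (i < j)%N)
      (((kappa (lift ord0 i) - kappa (lift ord0 j)) ^+ 2
         / ((kappa (lift ord0 i) - kappa ord0) ^+ 2
            * (kappa (lift ord0 j) - kappa ord0) ^+ 2)) ^ (c i * c j)).

(* Coordinates of the target (Cstar)^{binom n k} x WP^{3g-1}, via the affine
   cone: variables alpha_J (J in ksub) and (U,V,W)_{l} indexed by (j,l),
   j : 'I_3 (U,V,W), of weight j+1. *)
Definition coordT := (ksub + ('I_3 * 'I_g))%type.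

Definition mkpt (alpha : ksub -> F) (kappa : 'I_g.+1 -> F) : coordT -> F :=
  fun x => match x with
           | inl J => alpha J
           | inr (j, l) => (Bmx *m Kmx kappa) l j
           end.

Definition in_target (v : coordT -> F) : Prop :=
  (forall J, v (inl J) != 0) /\ exists x, v (inr x) != 0.

Definition wcone (S : (coordT -> F) -> Prop) : (coordT -> F) -> Prop :=
  fun v => exists w, S w /\ exists t : F, t != 0 /\
     (forall J, v (inl J) = w (inl J)) /\
     (forall j l, v (inr (j, l)) = t ^+ j.+1 * w (inr (j, l))).

(* Zariski closure inside (Cstar)^N x WP^{3g-1}, described by its set of
   representatives in (Cstar)^N x (C^{3g} \ 0). *)
Definition closure_target (S : (coordT -> F) -> Prop) : (coordT -> F) -> Prop :=
  fun v => zclosure (wcone S) v /\ in_target v.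

(* image of psi-tilde (on its domain of definition, restricted to the dense
   open set where the kappa_i are distinct and the lambda_l nonzero) *)
Definition image_psitilde : (coordT -> F) -> Prop :=
  fun v => exists (lambda : 'I_g -> F) (kappa : 'I_g.+1 -> F),
    (forall l, lambda l != 0) /\ injective kappa /\
    minorA lambda kappa Ik * KJ kappa Ik != 0 /\
    let alpha := fun J : ksub =>
      minorA lambda kappa (val J) * KJ kappa (val J)
        / (minorA lambda kappa Ik * KJ kappa Ik) in
    in_target (mkpt alpha kappa) /\ v = mkpt alpha kappa.

Definition image_psi : (coordT -> F) -> Prop :=
  fun v => exists (beta : 'I_g -> F) (kappa : 'I_g.+1 -> F),
    (forall l, beta l != 0) /\ injective kappa /\
    let alpha := fun J : ksub =>
      acoef (cI (val J)) kappa * \prod_(l < g) beta l ^ cI (val J) l in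
    in_target (mkpt alpha kappa) /\ v = mkpt alpha kappa.

Definition Hirota_variety : (coordT -> F) -> Prop := closure_target image_psi.

End Defs.

(* Main.v *)
Require Import Defs.
From HB Require Import structures.
From mathcomp Require Import all_boot all_order all_algebra.
From mathcomp Require Import reals complex.
From mathcomp Require Import ring zify.
From Stdlib Require Import FunctionalExtensionality.
Set Implicit Arguments. Unset Strict Implicit. Unset Printing Implicit Defensive.
Import Order.TTheory GRing.Theory Num.Theory.
Local Open Scope ring_scope.

Section Gen.
Variable F : fieldType.

Lemma prod_exprz (I : Type) (r : seq I) (P : pred I) (x : F) (e : I -> int) :
  x != 0 -> \prod_(i <- r | P i) x ^ e i = x ^ (\sum_(i <- r | P i) e i).
Proof.
move=> nz; rewrite (big_morph (fun m : int => x ^ m) (fun m n => expfzDr m n nz) (expr0z x)).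
by [].
Qed.

Lemma prod_expzl (I : Type) (r : seq I) (P : pred I) (f : I -> F) (n : int) :
  \prod_(i <- r | P i) f i ^ n = (\prod_(i <- r | P i) f i) ^ n.
Proof.
by rewrite (big_morph (fun x : F => x ^ n) (fun x y => expfzMl x y n) (exp1rz F n)).
Qed.

Lemma exch_prod n (P : 'I_n -> 'I_n -> bool) (G : 'I_n -> 'I_n -> F) :
  \prod_(i < n) \prod_(j < n | P i j) G i j = \prod_(j < n) \prod_(i < n | P i j) G i j.
Proof.
rewrite (exchange_big_dep xpredT) //.
Qed.

Lemma sym_prod n (h : 'I_n -> 'I_n -> F) :
  \prod_(i < n) \prod_(j < n | (i < j)%N) (h i j * h j i) =
  \prod_(i < n) \prod_(j < n | j != i) h i j.
Proof.
rewrite [RHS](eq_bigr (fun i : 'I_n => (\prod_(j < n | (i < j)%N) h i j) * \prod_(j < n | (j < i)%N) h i j)); last first.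
  move=> i _; rewrite (bigID (fun j : 'I_n => (i < j)%N)) /=; congr (_ * _).
    by apply: eq_bigl => j; rewrite -val_eqE /= neq_ltn; case: (ltngtP i j).
  by apply: eq_bigl => j; rewrite -val_eqE /= neq_ltn; case: (ltngtP i j).
transitivity (\prod_(i < n) ((\prod_(j < n | (i < j)%N) h i j) * \prod_(j < n | (i < j)%N) h j i)).
  by apply: eq_bigr => i _; rewrite big_split.
rewrite !big_split /=; congr (_ * _).
by rewrite exch_prod.
Qed.
End Gen.

Lemma expX2z (F : fieldType) (x : F) (m : int) : (x ^+ 2) ^ m = x ^ (2 * m).
Proof. exact: (exprz_exp x 2 m). Qed.

Lemma expb (F : fieldType) (x : F) (b c : bool) : x ^ ((b : nat)%:Z * (c : nat)%:Z) = if b && c then x else 1.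
Proof. case: b; case: c => /=; rewrite ?mulr1 ?mulr0 ?expr1z ?expr0z //. Qed.

Lemma sum_lt n m : (\sum_(i < n) ((i < m)%N : nat) = minn n m)%N.
Proof.
elim: n => [|n IH]; first by rewrite big_ord0 min0n.
rewrite big_ord_recr /= IH; lia.
Qed.

Lemma sumz (I : Type) (r : seq I) (P : pred I) (f : I -> nat) :
  \sum_(i <- r | P i) (f i)%:Z = (\sum_(i <- r | P i) f i)%N%:Z.
Proof. by rewrite (big_morph Posz PoszD (erefl (Posz 0))). Qed.

Lemma sum_neq (n : nat) (f : 'I_n -> int) i :
  \sum_(j < n | j != i) f j = \sum_(j < n) f j - f i.
Proof. by rewrite [X in _ = X - _](bigD1 i) //= addrAC subrr add0r. Qed.

Lemma aux (F : fieldType) (x y : F) (a b : int) : y != 0 ->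
  ((x * y)^-1) ^ (a - b) = (x ^ (a - b))^-1 * (y ^ b / y ^ a).
Proof.
move=> hy.
rewrite exprz_inv expfzMl -(invr_expz x (a - b)) opprB (expfzDr _ _ hy) -(invr_expz y a).
by [].
Qed.

Section Main.
Variables (F : fieldType) (g k : nat) (kappa : 'I_g.+1 -> F).
Hypothesis inj : injective kappa.

Definition pp (i : 'I_g) := kappa (lift ord0 i).
Definition Dd (i : 'I_g) := (pp i - kappa ord0) ^+ 2.
Definition Ee (i j : 'I_g) := (pp i - pp j) ^+ 2.
Definition NF (X : 'I_g -> int) (Y : 'I_g -> 'I_g -> int) :=
  (\prod_(i < g) Dd i ^ X i) * \prod_(i < g) \prod_(j < g | (i < j)%N) Ee i j ^ Y i j.

Lemma Dd_neq0 i : Dd i != 0.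
Proof.
rewrite /Dd expf_neq0 // subr_eq0; apply/eqP => /inj/eqP.
by rewrite eq_sym (negbTE (neq_lift _ _)).
Qed.

Lemma Ee_neq0 i j : i != j -> Ee i j != 0.
Proof.
move=> nij; rewrite /Ee expf_neq0 // subr_eq0; apply/eqP => /inj/lift_inj eij.
by rewrite eij eqxx in nij.
Qed.

Lemma Ee_sym i j : Ee j i = Ee i j.
Proof. by rewrite /Ee -sqrrN opprB. Qed.

Lemma NF_mul X Y X' Y' :
  NF X Y * NF X' Y' = NF (fun i => X i + X' i) (fun i j => Y i j + Y' i j).
Proof.
rewrite /NF.
have -> : \prod_(i < g) Dd i ^ (X i + X' i) = (\prod_(i < g) Dd i ^ X i) * \prod_(i < g) Dd i ^ X' i.
  by rewrite -big_split; apply: eq_bigr => i _; rewrite expfzDr // Dd_neq0.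
have -> : \prod_(i < g) \prod_(j < g | (i < j)%N) Ee i j ^ (Y i j + Y' i j) =
   (\prod_(i < g) \prod_(j < g | (i < j)%N) Ee i j ^ Y i j) * \prod_(i < g) \prod_(j < g | (i < j)%N) Ee i j ^ Y' i j.
  rewrite -big_split; apply: eq_bigr => i _; rewrite -big_split; apply: eq_bigr => j ij.
  by rewrite expfzDr // Ee_neq0 // -val_eqE /= neq_ltn ij.
ring.
Qed.

Lemma NF_ext X Y X' Y' : (forall i, X i = X' i) ->
  (forall i j, (i < j)%N -> Y i j = Y' i j) -> NF X Y = NF X' Y'.
Proof.
move=> hX hY; rewrite /NF; congr (_ * _).
  by apply: eq_bigr => i _; rewrite hX.
by apply: eq_bigr => i _; apply: eq_bigr => j ij; rewrite hY.
Qed.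

Lemma acoefE (c : 'I_g -> int) : acoef c kappa =
  NF (fun i => - (c i ^+ 2) + \sum_(j < g | j != i) - (c i * c j)) (fun i j => c i * c j).
Proof.
rewrite /acoef.
have -> : \prod_(i < g) (kappa (lift ord0 i) - kappa ord0) ^ (- (2 * c i ^+ 2)) =
   \prod_(i < g) Dd i ^ (- (c i ^+ 2)).
  by apply: eq_bigr => i _; rewrite /Dd /pp expX2z mulrN.
pose h i j := Dd i ^ (- (c i * c j)).
have -> : \prod_(i < g) \prod_(j < g | (i < j)%N)
      (((kappa (lift ord0 i) - kappa (lift ord0 j)) ^+ 2
         / ((kappa (lift ord0 i) - kappa ord0) ^+ 2
            * (kappa (lift ord0 j) - kappa ord0) ^+ 2)) ^ (c i * c j)) =
   \prod_(i < g) \prod_(j < g | (i < j)%N) (Ee i j ^ (c i * c j) * (h i j * h j i)).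
  apply: eq_bigr => i _; apply: eq_bigr => j _.
  rewrite expfzMl exprz_inv expfzMl /h [c j * c i]mulrC.
  by rewrite /Ee /Dd /pp.
rewrite [X in _ * X = _](eq_bigr (fun i : 'I_g => (\prod_(j < g | (i < j)%N) Ee i j ^ (c i * c j)) *
     \prod_(j < g | (i < j)%N) (h i j * h j i))); last by move=> i _; rewrite big_split.
rewrite big_split /= sym_prod /NF.
have -> : \prod_(i < g) \prod_(j < g | j != i) h i j =
    \prod_(i < g) Dd i ^ (\sum_(j < g | j != i) - (c i * c j)).
  by apply: eq_bigr => i _; rewrite /h prod_exprz ?Dd_neq0.
have -> : \prod_(i < g) Dd i ^ (- (c i ^+ 2) + \sum_(j < g | j != i) - (c i * c j)) =
   (\prod_(i < g) Dd i ^ (- (c i ^+ 2))) * \prod_(i < g) Dd i ^ (\sum_(j < g | j != i) - (c i * c j)).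
  by rewrite -big_split; apply: eq_bigr => i _; rewrite expfzDr // Dd_neq0.
ring.
Qed.


Definition bz (J : {set 'I_g.+1}) (i : 'I_g) : int := (lift ord0 i \in J)%:Z.

Lemma KJ_split (J : {set 'I_g.+1}) : KJ kappa J =
  (if ord0 \in J then \prod_(i < g) (if lift ord0 i \in J then pp i - kappa ord0 else 1) else 1) *
  \prod_(i < g) (if lift ord0 i \in J then
     \prod_(j < g | (i < j)%N) (if lift ord0 j \in J then pp j - pp i else 1) else 1).
Proof.
rewrite /KJ big_mkcond big_ord_recl /=; congr (_ * _).
  case: ifP => // _; rewrite big_mkcond big_ord_recl /= ltnn andbF mul1r.
  by apply: eq_bigr => i _; rewrite /bump leq0n add1n andbT.
apply: eq_bigr => i _; case: ifP => // _.
rewrite big_mkcond big_ord_recl /= ltn0 andbF mul1r [RHS]big_mkcond.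
apply: eq_bigr => j _; rewrite /bump !leq0n !add1n ltnS.
by case: (_ \in J); case: (i < j)%N.
Qed.

Lemma KJ2E (J : {set 'I_g.+1}) : KJ kappa J ^+ 2 =
  NF (fun i => (ord0 \in J)%:Z * bz J i) (fun i j => bz J i * bz J j).
Proof.
rewrite KJ_split exprMn /NF; congr (_ * _).
  case: ifP => _.
    rewrite -prodrXl; apply: eq_bigr => i _; rewrite /bz expb /=.
    by case: ifP => _; rewrite ?expr2 ?mulr1.
  by rewrite expr2 mulr1 big1 // => i _; rewrite /bz expb.
rewrite -prodrXl; apply: eq_bigr => i _.
rewrite /bz; case: ifP => bi.
  rewrite -prodrXl; apply: eq_bigr => j _; rewrite expb /=.
  by case: ifP => bj; rewrite ?expr2 ?mulr1 // -expr2 /Ee -sqrrN opprB.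
by rewrite expr2 mulr1 big1 // => j _; rewrite expb.
Qed.

Definition az (l : 'I_g) : int := ((lift ord0 l < k)%N : nat)%:Z.
Definition gam (l : 'I_g) := Dd l ^ (1 - az l) * \prod_(j < g | j != l) (Ee l j / Dd j) ^ az j.

Lemma gam_neq0 l : gam l != 0.
Proof.
rewrite /gam mulf_neq0 ?expfz_neq0 ?Dd_neq0 //; apply/prodf_neq0 => j jl.
by rewrite expfz_neq0 // mulf_neq0 ?invr_neq0 ?Dd_neq0 ?Ee_neq0 // eq_sym.
Qed.

Lemma gamE (c : 'I_g -> int) : \prod_(l < g) gam l ^ c l =
  NF (fun i => (1 - az i) * c i + \sum_(l < g | l != i) - (az i * c l))
     (fun i j => az j * c i + az i * c j).
Proof.
pose h l j := Ee l j ^ (az j * c l).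
rewrite (eq_bigr (fun l : 'I_g => Dd l ^ ((1 - az l) * c l) *
   ((\prod_(j < g | j != l) h l j) * \prod_(j < g | j != l) Dd j ^ (- (az j * c l))))); last first.
  move=> l _; rewrite /gam expfzMl exprz_exp -prod_expzl -big_split; congr (_ * _).
  apply: eq_bigr => j _; rewrite exprz_exp expfzMl exprz_inv.
  by rewrite /h.
rewrite big_split /= [X in _ * X = _]big_split /= -sym_prod /NF.
have -> : \prod_(i < g) \prod_(j < g | j != i) Dd j ^ (- (az j * c i)) =
    \prod_(j < g) Dd j ^ (\sum_(l < g | l != j) - (az j * c l)).
  rewrite exch_prod; apply: eq_bigr => j _; rewrite prod_exprz ?Dd_neq0 //.
  by congr (_ ^ _); apply: eq_bigl => l; rewrite eq_sym.
have -> : \prod_(i < g) Dd i ^ ((1 - az i) * c i + \sum_(l < g | l != i) - (az i * c l)) =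
   (\prod_(i < g) Dd i ^ ((1 - az i) * c i)) * \prod_(i < g) Dd i ^ (\sum_(l < g | l != i) - (az i * c l)).
  by rewrite -big_split; apply: eq_bigr => i _; rewrite expfzDr // Dd_neq0.
have -> : \prod_(i < g) \prod_(j < g | (i < j)%N) (h i j * h j i) =
   \prod_(i < g) \prod_(j < g | (i < j)%N) Ee i j ^ (az j * c i + az i * c j).
  apply: eq_bigr => i _; apply: eq_bigr => j ij.
  by rewrite /h Ee_sym -expfzDr // Ee_neq0 // -val_eqE /= neq_ltn ij orbT.
ring.
Qed.

Lemma sum_az : (1 <= k)%N -> (k <= g)%N -> \sum_(i < g) az i = (k - 1)%N%:Z.
Proof.
move=> k1 kg; rewrite /az sumz; congr Posz.
rewrite (eq_bigr (fun i : 'I_g => ((i < k.-1)%N : nat))); last first.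
  by move=> i _; rewrite lift0; congr nat_of_bool; lia.
rewrite sum_lt; lia.
Qed.

Lemma card_sum (J : {set 'I_g.+1}) : #|J| = (\sum_(i < g.+1) (i \in J : nat))%N.
Proof.
by rewrite -sum1_card big_mkcond; apply: eq_bigr => i _; case: (i \in J).
Qed.

Lemma sum_bz (J : {set 'I_g.+1}) : \sum_(i < g) bz J i = #|J|%:Z - (ord0 \in J : nat)%:Z.
Proof.
rewrite /bz sumz card_sum big_ord_recl /=.
by rewrite PoszD addrAC subrr add0r.
Qed.

Lemma bz_Ik i : bz (Ik g k) i = az i.
Proof. by rewrite /bz /az /Ik inE. Qed.

Lemma cIE J l : cI k J l = az l - bz J l.
Proof. by []. Qed.

Lemma star (J : {set 'I_g.+1}) : #|J| = k -> (1 <= k)%N -> (k <= g)%N ->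
  acoef (cI k J) kappa * KJ kappa (Ik g k) ^+ 2 =
  KJ kappa J ^+ 2 * \prod_(l < g) gam l ^ cI k J l.
Proof.
move=> hJ k1 kg.
rewrite acoefE !KJ2E gamE !NF_mul; congr NF; apply: functional_extensionality => i; last first.
  apply: functional_extensionality => j.
  by rewrite !cIE !bz_Ik; ring.
have hs (x : int) (f : 'I_g -> int) : \sum_(j < g) - (x * f j) = - (x * \sum_(j < g) f j).
  by rewrite sumrN mulr_sumr.
have hS : \sum_(j < g) cI k J j = (ord0 \in J : nat)%:Z - 1.
  rewrite (eq_bigr (fun j => az j - bz J j)) // sumrB sum_az // sum_bz hJ.
  have -> : ((k-1)%N : int) = (k:int) - 1 by lia.
  ring.
rewrite !sum_neq !hs hS /Ik inE k1 !cIE bz_Ik.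
rewrite [_ * az i]mul1r. move: (ord0 \in J) => b0. move: (az i) (bz J i) => a b. rewrite expr2. ring.
Qed.

Section Reindex.
Variable (J : {set 'I_g.+1}).
Hypothesis hJ : #|J| = k.
Let f (j : 'I_k) : 'I_g.+1 := nth ord0 (enum J) j.

Lemma reidx (P : pred 'I_g.+1) (G : 'I_g.+1 -> F) :
  \prod_(j in J | P j) G j = \prod_(j < k | P (f j)) G (f j).
Proof.
by rewrite -big_enum_cond (big_nth ord0) -cardE hJ big_mkord.
Qed.

Lemma reidx0 (G : 'I_g.+1 -> F) :
  \prod_(j in J) G j = \prod_(j < k) G (f j).
Proof.
by rewrite -big_enum (big_nth ord0) -cardE hJ big_mkord.
Qed.

Lemma f_lt (i j : 'I_k) : (f i < f j)%N = (i < j)%N.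
Proof.
have srt : sorted ltn (map val (enum J)).
  rewrite -[enum _](eq_filter (mem_enum _)).
  rewrite -(eq_filter (mem_map val_inj _)) -filter_map.
  by rewrite (sorted_filter ltn_trans) // unlock val_ord_enum iota_ltn_sorted.
have hv (m : 'I_k) : (f m : nat) = nth 0%N (map val (enum J)) m.
  by rewrite (nth_map ord0) // -cardE hJ.
have hs (m : 'I_k) : (nat_of_ord m < size (map val (enum J)))%N.
  by rewrite size_map -cardE hJ.
rewrite !hv; case: (ltngtP i j) => h.
- exact: (sorted_ltn_nth ltn_trans 0%N srt _ _ (hs i) (hs j) h).
- apply/negbTE; rewrite -leqNgt ltnW //.
  exact: (sorted_ltn_nth ltn_trans 0%N srt _ _ (hs j) (hs i) h).
- by move: h => /val_inj ->; rewrite ltnn.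
Qed.

Lemma KJ_reidx : KJ kappa J = \prod_(i < k) \prod_(j < k | (i < j)%N) (kappa (f j) - kappa (f i)).
Proof.
rewrite /KJ.
rewrite reidx0.
apply: eq_bigr => i _; rewrite reidx; apply: eq_bigl => j; by rewrite f_lt.
Qed.

Lemma minorAE (lambda : 'I_g -> F) :
  minorA k lambda kappa J = KJ kappa J * \prod_(l < g) lambda l ^ bz J l.
Proof.
rewrite /minorA /Atil /Dmx -/f mul_mx_diag.
set d := \row_(j < g.+1) _.
have -> : colsub f (\matrix_(i, j) (Vmx k kappa i j * d 0 j)) =
    Vandermonde k (\row_j kappa (f j)) *m diag_mx (\row_j d 0 (f j)).
  by rewrite mul_mx_diag; apply/matrixP => i j; rewrite !mxE.
rewrite det_mulmx det_Vandermonde det_diag KJ_reidx; congr (_ * _).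
  by apply: eq_bigr => i _; apply: eq_bigr => j _; rewrite !mxE.
rewrite (eq_bigr (fun j : 'I_k => d 0 (f j))); last by move=> j _; rewrite mxE.
rewrite -reidx0 big_mkcond big_ord_recl /= {1}/d mxE unlift_none if_same Monoid.mul1m.
apply: eq_bigr => l _; rewrite /d mxE liftK /bz.
by case: ifP.
Qed.

End Reindex.

Lemma KJ_neq0 J : KJ kappa J != 0.
Proof.
apply/prodf_neq0 => i _; apply/prodf_neq0 => j /andP [_ ij].
rewrite subr_eq0; apply/eqP => /inj e.
by rewrite e ltnn in ij.
Qed.

Lemma Lam_neq0 (lambda : 'I_g -> F) J : (forall l, lambda l != 0) ->
  \prod_(l < g) lambda l ^ bz J l != 0.
Proof. by move=> hl; apply/prodf_neq0 => l _; rewrite expfz_neq0. Qed.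

Lemma card_Ik : (k <= g.+1)%N -> #|Ik g k| = k.
Proof.
move=> kg; rewrite card_sum (eq_bigr (fun i : 'I_g.+1 => ((i < k)%N : nat))).
  by rewrite sum_lt; apply/minn_idPr.
by move=> i _; rewrite /Ik inE.
Qed.

Lemma core (lambda : 'I_g -> F) (J : {set 'I_g.+1}) :
  (forall l, lambda l != 0) -> #|J| = k -> (1 <= k)%N -> (k <= g)%N ->
  minorA k lambda kappa J * KJ kappa J / (minorA k lambda kappa (Ik g k) * KJ kappa (Ik g k)) =
  acoef (cI k J) kappa * \prod_(l < g) ((gam l * lambda l)^-1) ^ cI k J l.
Proof.
move=> hl hJ k1 kg.
have hIk : #|Ik g k| = k by apply: card_Ik; apply: leqW.
have st := star hJ k1 kg.
rewrite !minorAE //.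
have hI := KJ_neq0 (Ik g k).
have hLI := Lam_neq0 (Ik g k) hl.
have hG : \prod_(l < g) gam l ^ cI k J l != 0.
  by apply/prodf_neq0 => l _; rewrite expfz_neq0 // gam_neq0.
have -> : \prod_(l < g) ((gam l * lambda l)^-1) ^ cI k J l =
   (\prod_(l < g) gam l ^ cI k J l)^-1 *
   ((\prod_(l < g) lambda l ^ bz J l) / \prod_(l < g) lambda l ^ bz (Ik g k) l).
  rewrite -prodfV -prodfV -big_split -big_split /=; apply: eq_bigr => l _.
  by rewrite cIE bz_Ik aux // gam_neq0.
have -> : acoef (cI k J) kappa = KJ kappa J ^+ 2 * (\prod_(l < g) gam l ^ cI k J l) / KJ kappa (Ik g k) ^+ 2.
  by rewrite -st mulfK // expf_neq0.
field.
by rewrite hI hLI hG.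
Qed.

End Main.

Lemma images_eq (F : fieldType) (g k : nat) : (1 <= k)%N -> (k <= g)%N ->
  forall v, @image_psitilde F g k v <-> @image_psi F g k v.
Proof.
move=> k1 kg v; split.
- case=> lambda [kappa [hl [inj [hnz /= [hT ->]]]]].
  exists (fun l => (gam k kappa l * lambda l)^-1), kappa.
  split; first by move=> l; rewrite invr_neq0 // mulf_neq0 // gam_neq0.
  split => //=.
  set a1 := (fun J : ksub g k => _).
  set a2 := (fun J : ksub g k => _).
  have -> : a1 = a2.
    apply: functional_extensionality => J; rewrite /a1 /a2 core //.
    exact: (eqP (valP J)).
  by [].
- case=> beta [kappa [hb [inj /= [hT ->]]]].
  exists (fun l => (gam k kappa l * beta l)^-1), kappa.
  have hl : forall l, (gam k kappa l * beta l)^-1 != 0.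
    by move=> l; rewrite invr_neq0 // mulf_neq0 // gam_neq0.
  split => //; split => //; split.
    rewrite minorAE ?card_Ik //; last exact: leqW.
    by rewrite !mulf_neq0 // ?KJ_neq0 // Lam_neq0.
  set a1 := (fun J : ksub g k => _).
  set a2 := (fun J : ksub g k => _).
  have -> : a1 = a2.
    apply: functional_extensionality => J; rewrite /a1 /a2 core //; last exact: (eqP (valP J)).
    congr (_ * _); apply: eq_bigr => l _; congr (_ ^ _).
    have := gam_neq0 k inj l; have := hb l.
    move: (gam k kappa l) (beta l) => x y hy hx.
    by rewrite invf_div mulrC mulKf.
  by [].
Qed.

Lemma closure_eq (F : fieldType) (g k : nat) (S S' : (coordT g k -> F) -> Prop) :
  (forall w, S w <-> S' w) -> forall v, closure_target S v <-> closure_target S' v.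
Proof.
move=> HS v; rewrite /closure_target /zclosure; split => -[h t]; split => // p hp;
  apply: h => w [w0 [Sw rest]]; apply: hp; exists w0; split => //; exact/HS.
Qed.

Local Open Scope complex_scope.

Theorem theorem5p10 (R : realType) (g k : nat) (hg : (1 <= g)%N)
    (hk1 : (1 <= k)%N) (hkg : (k <= g)%N) :
  forall v : coordT g k -> R[i],
    @closure_target (R[i]) g k (@image_psitilde (R[i]) g k) v <->
    @Hirota_variety (R[i]) g k v.
Proof.
move=> v; rewrite /Hirota_variety; apply: closure_eq => w.
exact: images_eq.
Qed.
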